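(* Let $A$ be a commutative ring whose set of zero-divisors $Z(A)$ equals the union of its minimal prime ideals. Then the canonical group morphism $\mathfrak{C}(A)\to\mathfrak{C}(A_{\mathrm{red}})$, induced by the ring map $T(A)\to T(A_{\mathrm{red}})$, $a/s\mapsto (a+\mathfrak N)/(s+\mathfrak N)$ ($\mathfrak N$ the nilradical of $A$), is an isomorphism.
   Context: All rings are commutative with identity; $R_{\mathrm{red}}$ is $R$ modulo its nilradical, $T(R)$ is the total ring of fractions. For $R$-submodules $L,L'$ of $T(R)$, $LL'$ is the $R$-submodule of finite sums $\sum x_ky_k$. An $R$-submodule $L$ of $T(R)$ is an invertible ideal of $R$ if $LL'=R$ for some $R$-submodule $L'$ of $T(R)$; these form an abelian group and $\mathfrak{C}(R)$ is this group modulo $\{Rx: x\in T(R)^\ast\}$. The map $\mathfrak{C}(A)\to\mathfrak{C}(A_{\mathrm{red}})$ sends the class of $L$ to the class of the $A_{\mathrm{red}}$-submodule generated by the image of $L$. *)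

(* Defs.v *)
(* Commutative rings are [comPzRingType] (zero ring allowed). *)
From mathcomp Require Import all_boot all_algebra.
From Stdlib Require List.
Set Implicit Arguments. Unset Strict Implicit. Unset Printing Implicit Defensive.
Import GRing.Theory.
Local Open Scope ring_scope.

Section Defs.
Variable R : comPzRingType.

Definition regular (a : R) : Prop := forall b : R, a * b = 0 -> b = 0.
Definition zero_divisor (a : R) : Prop := exists b : R, b <> 0 /\ a * b = 0.
Definition unitP (x : R) : Prop := exists y : R, x * y = 1.
Definition nilpotentP (a : R) : Prop := exists n : nat, a ^+ n = 0.

Definition is_ideal (P : R -> Prop) : Prop :=
  P 0 /\ (forall x y, P x -> P y -> P (x + y)) /\ (forall r x, P x -> P (r * x)).
Definition is_prime_ideal (P : R -> Prop) : Prop :=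
  is_ideal P /\ ~ P 1 /\ (forall a b, P (a * b) -> P a \/ P b).
Definition is_minimal_prime (P : R -> Prop) : Prop :=
  is_prime_ideal P /\
  (forall Q : R -> Prop, is_prime_ideal Q -> (forall x, Q x -> P x) ->
     forall x, P x -> Q x).
End Defs.

(* [iA : A -> T] presents T as the total ring of fractions T(A):
   injective, regular elements become units, every element is a/s, s regular. *)
Definition total_ring_of_fractions (A T : comPzRingType) (iA : {rmorphism A -> T}) :=
  injective iA /\ (forall s, regular s -> unitP (iA s)) /\
  (forall x : T, exists a s, regular s /\ x * iA s = iA a).

(* [pi : A -> B] presents B as A_red = A / nilradical. *)
Definition reduction_map (A B : comPzRingType) (pi : {rmorphism A -> B}) :=
  (forall b : B, exists a, pi a = b) /\ (forall a, pi a = 0 <-> nilpotentP a).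

Section Submodules.
Variables (A T : comPzRingType) (iA : {rmorphism A -> T}).

Definition is_submodule (L : T -> Prop) : Prop :=
  L 0 /\ (forall x y, L x -> L y -> L (x + y)) /\ (forall r x, L x -> L (iA r * x)).

Definition prod_sub (L L' : T -> Prop) (z : T) : Prop :=
  exists s : seq (T * T), (forall p, List.In p s -> L p.1 /\ L' p.2) /\
    z = \sum_(p <- s) (p.1 * p.2).

Definition base_sub (z : T) : Prop := exists r, z = iA r.

Definition invertible_ideal (L : T -> Prop) : Prop :=
  is_submodule L /\
  exists L', is_submodule L' /\ forall z, prod_sub L L' z <-> base_sub z.

(* L and M have the same class in C(A): M = L x for some unit x of T *)
Definition same_class (L M : T -> Prop) : Prop :=
  exists x : T, unitP x /\ forall z, M z <-> exists y, L y /\ z = x * y.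
End Submodules.

Definition sub_eq (T : Type) (L M : T -> Prop) := forall z, L z <-> M z.

(* B-submodule of TB generated by phi(L) *)
Definition ext_sub (B TA TB : comPzRingType) (iB : {rmorphism B -> TB})
  (phi : {rmorphism TA -> TB}) (L : TA -> Prop) (z : TB) : Prop :=
  exists s : seq (B * TA), (forall p, List.In p s -> L p.2) /\
    z = \sum_(p <- s) (iB p.1 * phi p.2).

(* Main.v *)
From HB Require Import structures.
Require Import Defs.
From mathcomp Require Import all_boot all_algebra.
From mathcomp Require Import ring.
From mathcomp Require classical_sets.
From Stdlib Require Import Classical ClassicalEpsilon.
Set Implicit Arguments. Unset Strict Implicit. Unset Printing Implicit Defensive.
Import GRing.Theory.
Local Open Scope ring_scope.


Section Zorn.
Variable A : comPzRingType.

Lemma prime_powP (P : A -> Prop) x n : is_prime_ideal P -> P (x ^+ n) -> P x.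
Proof.
move=> [[P0 [PD PM]] [P1 Pp]]; elim: n => [|n IH]; first by rewrite expr0 => /P1.
by rewrite exprS => /Pp [] // /IH.
Qed.

Lemma minprime_annih (P : A -> Prop) (s : A) :
  is_minimal_prime P -> P s -> exists y n, ~ P y /\ y * s ^+ n = 0.
Proof.
move=> [Pp Pmin] Ps; apply: NNPP => Hn.
have H : forall y n, ~ P y -> y * s ^+ n <> 0.
  by move=> y n nPy e; apply: Hn; exists y, n.
pose S z := exists y n, ~ P y /\ z = y * s ^+ n.
have S0 : ~ S 0 by move=> [y [n [nPy e]]]; exact: (H y n nPy (esym e)).
have nP1 : ~ P 1 by case: Pp => _ [].
pose Pz (I : A -> Prop) := (forall x, I x -> ~ S x) /\
  (forall x y, I x -> I y -> I (x + y)) /\ (forall r x, I x -> I (r * x)).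
have [Q [[QS [QD QM]] Qmax]] : exists Q, Pz Q /\
    (forall B, classical_sets.proper Q B -> ~ Pz B).
  apply: classical_sets.Zorn_bigcup => F FP Ftot; split; [|split].
  - by move=> x [X FX Xx]; have [+ _] := FP X FX; apply.
  - move=> x y [X FX Xx] [Y FY Yy].
    have [XY|YX] := Ftot X Y FX FY.
    + by exists Y => //; have [_ [+ _]] := FP Y FY; apply => //; apply: XY.
    + by exists X => //; have [_ [+ _]] := FP X FX; apply => //; apply: YX.
  - move=> r x [X FX Xx]; exists X => //.
    by have [_ [_ +]] := FP X FX; apply.
have [x0 Qx0] : exists x, Q x.
  apply: NNPP => nQ; apply: (Qmax (fun z => z = 0)).
  - split; first by move=> t Qt; case: nQ; exists t.
    by move=> /(_ 0 erefl) Q0; apply: nQ; exists 0.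
  - split; first by move=> x -> .
    split; first by move=> x y -> ->; rewrite addr0.
    by move=> r x ->; rewrite mulr0.
have Q0 : Q 0 by have := QM 0 x0 Qx0; rewrite mul0r.
have QP : forall x, Q x -> P x.
  move=> x Qx; apply: NNPP => nPx; apply: (QS x Qx); exists x, 0%N.
  by rewrite expr0 mulr1.
have Qprime : is_prime_ideal Q.
  split; first by split=> //; split.
  split.
    move=> Q1; apply: (QS 1 Q1); exists 1, 0%N; by rewrite expr0 mulr1.
  move=> a b Qab; apply: NNPP => /not_or_and [nQa nQb].
  have ext : forall c, ~ Q c -> exists q r y n, Q q /\ ~ P y /\ q + r * c = y * s ^+ n.
    move=> c nQc.
    have : ~ Pz (fun z => exists q r, Q q /\ z = q + r * c).
      apply: Qmax; split.
        by move=> z Qz; exists z, 0; rewrite mul0r addr0.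
      move=> sub; apply: nQc; apply: sub; exists 0, 1.
      by rewrite mul1r add0r.
    move=> nPz; apply: NNPP => nex; apply: nPz; split; [|split].
    - move=> z [q [r [Qq ->]]] [y [n [nPy e]]]; apply: nex.
      by exists q, r, y, n.
    - move=> z w [q [r [Qq ->]]] [q' [r' [Qq' ->]]].
      exists (q + q'), (r + r'); split; first exact: (QD).
      by rewrite mulrDl; ring.
    - move=> t z [q [r [Qq ->]]]; exists (t * q), (t * r); split; first exact: (QM).
      by ring.
  have [q1 [r1 [y1 [n1 [Qq1 [nPy1 e1]]]]]] := ext a nQa.
  have [q2 [r2 [y2 [n2 [Qq2 [nPy2 e2]]]]]] := ext b nQb.
  apply: (QS ((q1 + r1 * a) * (q2 + r2 * b))).
    have -> : (q1 + r1 * a) * (q2 + r2 * b) =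
      q1 * (q2 + r2 * b) + (r1 * a * q2 + (r1 * r2) * (a * b)) by ring.
    apply: (QD); first by rewrite mulrC; apply: (QM).
    apply: (QD); first by apply: (QM).
    by apply: (QM).
  exists (y1 * y2), (n1 + n2)%N; split.
    by case: Pp => _ [_ Pm] /Pm [].
  by rewrite e1 e2 exprD; ring.
have Qs : Q s by apply: (Pmin Q Qprime QP).
by apply: (QS s Qs); exists 1, 1%N; rewrite expr1 mul1r.
Qed.

End Zorn.
Section Nil.
Variable R : comPzRingType.
Implicit Types x y : R.

Lemma nil0 : nilpotentP (0 : R).
Proof. by exists 1%N; rewrite expr1. Qed.

Lemma nilD x y : nilpotentP x -> nilpotentP y -> nilpotentP (x + y).
Proof.
move=> [m xm] [n yn]; exists (m + n)%N; rewrite exprDn big1 // => i _.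
have [lt|ge] := ltnP i n.
  have -> : (m + n - i = m + (n - i))%N by rewrite addnBA // ltnW.
  by rewrite exprD xm !mul0r mul0rn.
by rewrite -(subnKC ge) exprD yn mul0r mulr0 mul0rn.
Qed.

Lemma nilM y x : nilpotentP x -> nilpotentP (y * x).
Proof. by move=> [n xn]; exists n; rewrite exprMn xn mulr0. Qed.

Lemma nilMr y x : nilpotentP x -> nilpotentP (x * y).
Proof. by rewrite mulrC; apply: nilM. Qed.

Lemma nilN x : nilpotentP x -> nilpotentP (- x).
Proof. by move=> h; rewrite -mulN1r; apply: nilM. Qed.

Lemma nilB x y : nilpotentP x -> nilpotentP y -> nilpotentP (x - y).
Proof. by move=> hx hy; apply: nilD => //; apply: nilN. Qed.

Lemma nil_sum (I : Type) (r : seq I) (P : pred I) (F : I -> R) :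
  (forall i, P i -> nilpotentP (F i)) -> nilpotentP (\sum_(i <- r | P i) F i).
Proof. by move=> h; apply: (big_ind (@nilpotentP R)) => //; [apply: nil0|apply: nilD]. Qed.

Lemma nil_unit x : nilpotentP (x - 1) -> unitP x.
Proof.
move=> [n hn]; exists (\sum_(i < n) (1 - x) ^+ i).
have := subrX1 (1 - x) n.
have -> : (1 - x) ^+ n = 0.
  by rewrite -opprB -mulN1r exprMn hn mulr0.
rewrite sub0r addrAC subrr add0r mulNr => /eqP; rewrite eqr_opp => /eqP <-.
by [].
Qed.

Lemma nilP_pow x n : x ^+ n = 0 -> forall m, (n <= m)%N -> x ^+ m = 0.
Proof. by move=> hn m le; rewrite -(subnKC le) exprD hn mul0r. Qed.

Lemma pigeon (S : seq R) : (forall s, s \in S -> nilpotentP s) ->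
  exists N, forall w : seq R, (N <= size w)%N -> (forall x, x \in w -> x \in S) ->
    \prod_(x <- w) x = 0.
Proof.
elim: S => [|s S IH] hS.
  exists 1%N => [[|x w]] //= _ /(_ x); rewrite inE eqxx => /(_ isT).
  by rewrite in_nil.
have [m sm] := hS s (mem_head _ _).
have [N' HN'] := IH (fun t tS => hS t (@mem_behead _ (s :: S) t tS)).
exists (m + N')%N => w Hw Hin.
rewrite (bigID (pred1 s)) /=.
have [le|lt] := leqP m (count (pred1 s) w).
  rewrite (eq_bigr (fun=> s)); last by move=> i /eqP.
  rewrite big_const_seq iter_mulr_1.
  by rewrite (nilP_pow sm le) mul0r.
rewrite -(big_filter w (fun i => true && (i != s))) HN' ?mulr0 //.
  rewrite size_filter.
  have := count_predC (pred1 s) w.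
  have -> : count (fun i => true && (i != s)) w = count (predC (pred1 s)) w by [].
  move=> e; rewrite -(leq_add2l (count (pred1 s) w)) e.
  by apply: leq_trans Hw; rewrite leq_add2r ltnW.
move=> x; rewrite mem_filter /= => /andP [xs xw].
by have := Hin x xw; rewrite inE (negbTE xs).
Qed.

Definition inPow (S : seq R) n x := exists l : seq (R * seq R),
  (forall p, p \in l -> size p.2 = n /\ (forall y, y \in p.2 -> y \in S)) /\
  x = \sum_(p <- l) p.1 * \prod_(y <- p.2) y.

Lemma inPow0 S x : inPow S 0 x.
Proof.
exists [:: (x, [::])]; split; last by rewrite big_seq1 big_nil mulr1.
by move=> p; rewrite inE => /eqP -> /=.
Qed.

Lemma inPowD S n x y : inPow S n x -> inPow S n y -> inPow S n (x + y).
Proof.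
move=> [l1 [h1 ->]] [l2 [h2 ->]]; exists (l1 ++ l2); split; last by rewrite big_cat.
by move=> p; rewrite mem_cat => /orP [/h1|/h2].
Qed.

Lemma inPowZ S n : inPow S n 0.
Proof. by exists [::]; split; [move=> p; rewrite in_nil | rewrite big_nil]. Qed.

Lemma inPowM S n x s : inPow S n x -> s \in S -> inPow S n.+1 (x * s).
Proof.
move=> [l [h ->]] sS; exists (map (fun p => (p.1, s :: p.2)) l); split.
  move=> p /mapP [q ql ->] /=; have [e hq] := h q ql; split; first by rewrite e.
  by move=> y; rewrite inE => /orP [/eqP ->|/hq].
rewrite big_map mulr_suml; apply: eq_bigr => p _ /=.
by rewrite big_cons -mulrA [s * _]mulrC.
Qed.

Lemma inPow_sum S n (I : Type) (r : seq I) (F : I -> R) :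
  (forall i, inPow S n (F i)) -> inPow S n (\sum_(i <- r) F i).
Proof. by move=> h; apply: (big_ind (inPow S n)) => //; [apply: inPowZ|apply: inPowD]. Qed.

Definition nilmx m n (M : 'M[R]_(m, n)) := forall i j, nilpotentP (M i j).

Lemma mx_nilpotent n (M : 'M[R]_n) : nilmx M -> exists N, M ^+ N = 0.
Proof.
move=> hM.
pose S := [seq M ij.1 ij.2 | ij <- enum {: 'I_n * 'I_n}].
have hS : forall s, s \in S -> nilpotentP s by move=> s /mapP [ij _ ->].
have [N HN] := pigeon hS.
have key : forall t i j, inPow S t ((M ^+ t) i j).
  elim=> [|t IH] i j; first exact: inPow0.
  rewrite exprSr -mulmxE mxE; apply: inPow_sum => l; apply: inPowM => //.
  by apply/mapP; exists (l, j) => //; rewrite mem_enum.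
exists N; apply/matrixP => i j; rewrite mxE.
have [l [hl ->]] := key N i j.
rewrite big_seq big1 // => p pl; have [e hp] := hl p pl.
by rewrite HN ?mulr0 // e.
Qed.

Lemma nilmxD m n (M1 M2 : 'M[R]_(m, n)) : nilmx M1 -> nilmx M2 -> nilmx (M1 + M2).
Proof. by move=> h1 h2 i j; rewrite mxE; apply: nilD. Qed.

Lemma nilmxN m n (M1 : 'M[R]_(m, n)) : nilmx M1 -> nilmx (- M1).
Proof. by move=> h1 i j; rewrite mxE; apply: nilN. Qed.

Lemma nilmxMl m n p (M1 : 'M[R]_(m, n)) (M2 : 'M[R]_(n, p)) : nilmx M1 -> nilmx (M1 *m M2).
Proof. by move=> h1 i j; rewrite mxE; apply: nil_sum => l _; apply: nilMr. Qed.

Lemma nilmxMr m n p (M1 : 'M[R]_(m, n)) (M2 : 'M[R]_(n, p)) : nilmx M2 -> nilmx (M1 *m M2).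
Proof. by move=> h1 i j; rewrite mxE; apply: nil_sum => l _; apply: nilM. Qed.

End Nil.
Section IdemCore.
Variable R : comNzRingType.

Definition Pd (Q : {poly R}) := Q - Q * Q.
Definition Fn (Q : {poly R}) := Q * Q * (3%:R - 2%:R * Q).

Lemma Pd_Fn Q : Pd (Fn Q) = Pd Q * Pd Q * (3%:R + 4%:R * Pd Q).
Proof. rewrite /Pd /Fn; ring. Qed.

Lemma Fn_sub Q : Fn Q - Q = Pd Q * (2%:R * Q - 1).
Proof. rewrite /Pd /Fn; ring. Qed.

Lemma idem_core k (g : 'M[R]_k.+1) : (exists N, (g - g * g) ^+ N = 0) ->
  exists G V, G * G = G /\ G - g = (g - g * g) * V.
Proof.
move=> [N hN].
have cf : commr_rmorph (@scalar_mx R k.+1) g.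
  by move=> a; rewrite /GRing.comm -!mulmxE scalar_mxC.
pose hm : {rmorphism {poly R} -> 'M[R]_k.+1} := horner_morph cf.
have hmX : hm 'X = g by apply: horner_morphX.
pose Q t := iter t Fn 'X.
have hPX : hm (Pd 'X) = g - g * g by rewrite /Pd rmorphB rmorphM /= hmX.
have step : forall P K, hm (Pd P) ^+ (2 * K) = 0 -> hm (Pd (Fn P)) ^+ K = 0.
  move=> P K h; rewrite -rmorphXn /= Pd_Fn !exprMn -exprD addnn -mul2n.
  by rewrite rmorphM rmorphXn /= h mul0r.
have iterP : forall t K, hm (Pd 'X) ^+ (K * 2 ^ t) = 0 -> hm (Pd (Q t)) ^+ K = 0.
  elim=> [|t IH] K h; first by move: h; rewrite expn0 muln1.
  rewrite /Q iterS; apply: step; apply: IH.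
  by move: h; rewrite expnS mulnA [(K * 2)%N]mulnC.
have HG : hm (Pd (Q N)) = 0.
  rewrite -[hm _]expr1; apply: iterP; rewrite mul1n hPX.
  by rewrite -(subnKC (ltnW (ltn_expl N (ltnSn 1)))) exprD hN mul0r.
have HV : forall t, exists V, Q t - 'X = Pd 'X * V.
  have HW : forall t, exists W, Pd (Q t) = Pd 'X * W.
    elim=> [|t [W hW]]; first by exists 1; rewrite mulr1.
    exists (W * Pd (Q t) * (3%:R + 4%:R * Pd (Q t))).
    by rewrite /Q iterS Pd_Fn -/(Q t) hW; ring.
  elim=> [|t [V hV]]; first by exists 0; rewrite subrr mulr0.
  have [W hW] := HW t.
  exists (W * (2%:R * Q t - 1) + V).
  have -> : Q t.+1 - 'X = (Fn (Q t) - Q t) + (Q t - 'X) by rewrite /Q iterS; ring.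
  by rewrite Fn_sub hW hV; ring.
have [V hV] := HV N.
exists (hm (Q N)), (hm V); split.
  by move/eqP: HG; rewrite /Pd rmorphB rmorphM /= subr_eq0 => /eqP <-.
by rewrite -{1}hmX -rmorphB hV rmorphM hPX.
Qed.

End IdemCore.

Definition nzify (R : comPzRingType) (H : (1:R) != 0) : comNzRingType :=
  HB.pack_for comNzRingType R (GRing.PzSemiRing_isNonZero.Build R H).

Lemma idem_lift (R : comPzRingType) n (g : 'M[R]_n) :
  nilmx (g - g * g) -> exists G, G * G = G /\ nilmx (G - g).
Proof.
case: n g => [|k] g hg.
  exists g; split; last by rewrite subrr => i j; rewrite mxE; apply: nil0.
  by apply/matrixP => -[].
case: (eqVneq (1:R) 0) => [h10|hn0].
  have triv : forall x : R, x = 0 by move=> x; rewrite -[x]mulr1 h10 mulr0.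
  exists g; split; last by rewrite subrr => i j; rewrite mxE; apply: nil0.
  by apply/matrixP => i j; rewrite [LHS]triv [RHS]triv.
have [N hN] := mx_nilpotent hg.
have [G [V [GG GV]]] := @idem_core (nzify hn0) k g (ex_intro _ N hN).
exists G; split => //.
by rewrite GV -mulmxE; apply: nilmxMl.
Qed.

Section Gen.
Variable R : comPzRingType.
Implicit Types x y z s t : R.

Lemma regM s t : regular s -> regular t -> regular (s * t).
Proof. by move=> hs ht b; rewrite -mulrA => /hs /ht. Qed.

Lemma regX s n : regular s -> regular (s ^+ n).
Proof.
move=> hs; elim: n => [|n IH]; first by move=> b; rewrite expr0 mul1r.
by rewrite exprS; apply: regM.
Qed.

Lemma reg1 : regular (1 : R).
Proof. by move=> b; rewrite mul1r. Qed.

Lemma unit_reg x : unitP x -> regular x.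
Proof. by move=> [y xy] b xb; rewrite -[b]mul1r -xy mulrAC xb mul0r. Qed.

Lemma unit_cancel x y z : unitP x -> y * x = z * x -> y = z.
Proof.
move=> ux e; apply/eqP; rewrite -subr_eq0; apply/eqP.
by apply: (unit_reg ux); rewrite mulrBr mulrC e mulrC subrr.
Qed.

Lemma unitM x y : unitP x -> unitP y -> unitP (x * y).
Proof. by move=> [x' hx] [y' hy]; exists (x' * y'); rewrite mulrACA hx hy mulr1. Qed.

Definition invu x : R := epsilon (inhabits 0) (fun y => x * y = 1).

Lemma invuP x : unitP x -> x * invu x = 1.
Proof. by move=> h; apply: (epsilon_spec (inhabits 0) (fun y => x * y = 1)). Qed.

End Gen.

Section Phi.
Variables (A TA B TB : comPzRingType) (iA : {rmorphism A -> TA})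
  (pi : {rmorphism A -> B}) (iB : {rmorphism B -> TB}).
Hypotheses (HA : total_ring_of_fractions iA) (Hpi : reduction_map pi)
  (HB : total_ring_of_fractions iB).

Lemma pi_surj b : exists a, pi a = b.
Proof. by case: Hpi => h _; apply: h. Qed.

Lemma pi0 a : pi a = 0 -> nilpotentP a.
Proof. by case: Hpi => _ h /h. Qed.

Lemma nil_pi a : nilpotentP a -> pi a = 0.
Proof. by case: Hpi => _ h /h. Qed.

Lemma iA_inj : injective iA. Proof. by case: HA. Qed.
Lemma iB_inj : injective iB. Proof. by case: HB. Qed.

Lemma reg_pi s : regular s -> regular (pi s).
Proof.
move=> hs y; have [b <-] := pi_surj y; rewrite -rmorphM => /pi0 [n].
rewrite exprMn => /(@regX _ s n hs) bn; apply: nil_pi; by exists n.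
Qed.

Lemma unit_iB s : regular s -> unitP (iB s).
Proof. by case: HB => _ [h _] /h. Qed.

Lemma unit_iA s : regular s -> unitP (iA s).
Proof. by case: HA => _ [h _] /h. Qed.

Definition rep (x : TA) : A * A :=
  epsilon (inhabits (0, 0)) (fun p => regular p.2 /\ x * iA p.2 = iA p.1).

Lemma repP x : regular (rep x).2 /\ x * iA (rep x).2 = iA (rep x).1.
Proof.
apply: (epsilon_spec (inhabits (0, 0)) (fun p => regular p.2 /\ x * iA p.2 = iA p.1)).
by case: HA => _ [_ /(_ x) [a [s [hs e]]]]; exists (a, s).
Qed.

Definition phif (x : TA) : TB := iB (pi (rep x).1) * invu (iB (pi (rep x).2)).

Lemma phi_spec x a s : regular s -> x * iA s = iA a -> phif x * iB (pi s) = iB (pi a).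
Proof.
move=> hs e; have [hs0 e0] := repP x.
set a0 := (rep x).1 in e0 *; set s0 := (rep x).2 in hs0 e0 *.
have e1 : a0 * s = a * s0.
  by apply: iA_inj; rewrite !rmorphM -e -e0 mulrAC.
have e2 : iB (pi a0) * iB (pi s) = iB (pi a) * iB (pi s0).
  by rewrite -!rmorphM e1.
rewrite /phif -/a0 -/s0 mulrAC e2 -mulrA invuP ?mulr1 //.
exact: unit_iB (reg_pi hs0).
Qed.

Lemma phi_eq x a s y : regular s -> x * iA s = iA a -> y * iB (pi s) = iB (pi a) -> phif x = y.
Proof.
move=> hs e ey; apply: (unit_cancel (unit_iB (reg_pi hs))).
by rewrite (phi_spec hs e) ey.
Qed.

Lemma phi_nmod : nmod_morphism phif.
Proof.
split.
  apply: (@phi_eq 0 0 1); [exact: reg1|by rewrite mul0r rmorph0|by rewrite mul0r !rmorph0].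
move=> x y; have [hs e] := repP x; have [ht f] := repP y.
set a := (rep x).1 in e *; set s := (rep x).2 in hs e *.
set b := (rep y).1 in f *; set t := (rep y).2 in ht f *.
apply: (@phi_eq _ (a * t + b * s) (s * t)); first exact: regM.
  by rewrite rmorphD !rmorphM -e -f; ring.
have es := phi_spec hs e; have ft := phi_spec ht f.
by rewrite !rmorphD !rmorphM -es -ft; ring.
Qed.

Lemma phi_mon : monoid_morphism phif.
Proof.
split.
  by apply: (@phi_eq 1 1 1); [exact: reg1|by rewrite mul1r|by rewrite mul1r].
move=> x y; have [hs e] := repP x; have [ht f] := repP y.
set a := (rep x).1 in e *; set s := (rep x).2 in hs e *.
set b := (rep y).1 in f *; set t := (rep y).2 in ht f *.
apply: (@phi_eq _ (a * b) (s * t)); first exact: regM.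
  by rewrite !rmorphM -e -f; ring.
have es := phi_spec hs e; have ft := phi_spec ht f.
by rewrite !rmorphM -es -ft; ring.
Qed.

Definition phi : {rmorphism TA -> TB} :=
  HB.pack phif (GRing.isNmodMorphism.Build _ _ phif phi_nmod)
    (GRing.isMonoidMorphism.Build _ _ phif phi_mon).

Lemma phi_iA a : phi (iA a) = iB (pi a).
Proof.
apply: (@phi_eq _ a 1); first exact: reg1.
  by rewrite rmorph1 mulr1.
by rewrite !rmorph1 mulr1.
Qed.

End Phi.

Lemma fchoice (I T : Type) (t0 : T) (P : I -> T -> Prop) :
  (forall i, exists x, P i x) -> exists f : I -> T, forall i, P i (f i).
Proof.
move=> h; exists (fun i => epsilon (inhabits t0) (P i)) => i.
exact: (epsilon_spec (inhabits t0) (P i) (h i)).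
Qed.

Lemma mx_choice (T : Type) (t0 : T) m n (P : 'I_m -> 'I_n -> T -> Prop) :
  (forall i j, exists x, P i j x) -> exists M : 'M[T]_(m, n), forall i j, P i j (M i j).
Proof.
move=> h; have [f hf] := @fchoice _ _ t0 (fun ij x => P ij.1 ij.2 x) (fun ij => h ij.1 ij.2).
by exists (\matrix_(i, j) f (i, j)) => i j; rewrite mxE; apply: (hf (i, j)).
Qed.

Lemma memIn (T : eqType) (x : T) (s : seq T) : x \in s -> List.In x s.
Proof.
elim: s => [|y s IH] //=; rewrite inE => /orP [/eqP ->|/IH]; by [left|right].
Qed.

Lemma InMap (T U : Type) (f : T -> U) (y : U) (s : seq T) :
  List.In y (map f s) -> exists x, List.In x s /\ y = f x.
Proof.
elim: s => [|x s IH] //= [<-|/IH [z [zs ->]]]; first by exists x; split=> //; left.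
by exists z; split=> //; right.
Qed.

Section Main.
Variables (A TA B TB : comPzRingType) (iA : {rmorphism A -> TA})
  (pi : {rmorphism A -> B}) (iB : {rmorphism B -> TB}).
Hypotheses (HA : total_ring_of_fractions iA) (Hpi : reduction_map pi)
  (HB : total_ring_of_fractions iB).
Hypothesis Hz : forall a : A, zero_divisor a <-> exists P, is_minimal_prime P /\ P a.

Let ph : {rmorphism TA -> TB} := phi HA Hpi HB.
Let phiA a : ph (iA a) = iB (pi a) := phi_iA HA Hpi HB a.

Lemma ph0_nil x : ph x = 0 -> nilpotentP x.
Proof.
have [hs e] := repP HA x.
set a := (rep iA x).1 in e *; set s := (rep iA x).2 in hs e *.
move=> h0; have : ph x * iB (pi s) = iB (pi a) := phi_spec HA Hpi HB hs e.
rewrite h0 mul0r => /esym; rewrite -(rmorph0 iB) => /(iB_inj HB) /(pi0 Hpi) [n an].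
exists n; apply: (unit_reg (unit_iA HA (@regX _ s n hs))).
by rewrite rmorphXn -exprMn [iA s * x]mulrC e -rmorphXn an rmorph0.
Qed.

Lemma reg_lift s : regular (pi s) -> regular s.
Proof.
move=> hps; apply: NNPP => nreg.
have zd : zero_divisor s.
  apply: NNPP => nzd; apply: nreg => b sb; apply: NNPP => b0; apply: nzd.
  by exists b.
have [P [Pmin Ps]] := (Hz s).1 zd.
have [y [n [nPy ys]]] := minprime_annih Pmin Ps.
have : pi y = 0.
  rewrite mulrC in ys; apply: (@regX _ (pi s) n hps).
  by rewrite -rmorphXn -rmorphM ys rmorph0.
move=> /(pi0 Hpi) [m ym]; apply: nPy.
have Pp := Pmin.1; apply: (prime_powP (n := m) Pp); rewrite ym.
by case: Pp => [[]].
Qed.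

Lemma ph_surj y : exists x, ph x = y.
Proof.
case: HB => _ [_ /(_ y) [b [t [ht e]]]].
have [a ea] := pi_surj Hpi b; have [s es] := pi_surj Hpi t.
subst t b; have hs := reg_lift ht.
exists (iA a * invu (iA s)).
apply: (unit_cancel (unit_iB HB ht)); rewrite e -phiA -rmorphM -mulrA.
by rewrite [_ * iA s]mulrC invuP ?mulr1 ?phiA //; apply: unit_iA.
Qed.

Lemma unit_lift x : unitP (ph x) -> unitP x.
Proof.
move=> [y xy]; have [v ev] := ph_surj y; subst y.
have : unitP (x * v).
  apply: nil_unit; apply: ph0_nil; by rewrite rmorphB rmorphM xy rmorph1 subrr.
by move=> [w h]; exists (v * w); rewrite mulrA.
Qed.

Lemma unit_ph x : unitP x -> unitP (ph x).
Proof. by move=> [y h]; exists (ph y); rewrite -rmorphM h rmorph1. Qed.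

Notation ext := (ext_sub iB ph).

Lemma ext_img L : is_submodule iA L ->
  forall z, ext L z <-> exists x, L x /\ z = ph x.
Proof.
move=> [L0 [LD LM]] z; split.
  move=> [s [hs ->]]; elim: s hs => [|p s IH] hs.
    by exists 0; rewrite big_nil rmorph0.
  have [x [Lx ex]] := IH (fun q qs => hs q (or_intror qs)).
  have [a ea] := pi_surj Hpi p.1.
  exists (iA a * p.2 + x); split; first by apply: LD => //; apply: LM; apply: hs; left.
  by rewrite big_cons ex rmorphD rmorphM phiA ea.
move=> [x [Lx ->]]; exists [:: (1, x)]; split; first by move=> p [<-|].
by rewrite big_seq1 rmorph1 mul1r.
Qed.

Lemma ext_sub_mod L : is_submodule iA L -> is_submodule iB (ext L).
Proof.
move=> hL; have [L0 [LD LM]] := hL; split; [|split].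
- by apply/(ext_img hL); exists 0; rewrite rmorph0.
- move=> x y /(ext_img hL) [x1 [L1 ->]] /(ext_img hL) [y1 [L2 ->]].
  by apply/(ext_img hL); exists (x1 + y1); rewrite rmorphD; split => //; apply: LD.
- move=> r x /(ext_img hL) [x1 [L1 ->]]; apply/(ext_img hL).
  have [a <-] := pi_surj Hpi r; exists (iA a * x1); split; first exact: LM.
  by rewrite rmorphM phiA.
Qed.

Lemma prod_mod (T R : comPzRingType) (j : {rmorphism R -> T}) (L M : T -> Prop) :
  is_submodule j L -> is_submodule j M -> is_submodule j (prod_sub L M).
Proof.
move=> [L0 [LD LM]] [M0 [MD MM]]; split; [|split].
- by exists [::]; rewrite big_nil.
- move=> x y [s1 [h1 ->]] [s2 [h2 ->]]; exists (s1 ++ s2); split; last by rewrite big_cat.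
  by move=> p /(@List.in_app_or _ s1 s2 p) [/h1|/h2].
- move=> r x [s [h ->]]; exists (map (fun p => (j r * p.1, p.2)) s); split.
    move=> p hp; have [q [qs ->]] := InMap hp; rewrite /=; have [] := h q qs; split=> //; exact: LM.
  rewrite big_map mulr_sumr; apply: eq_bigr => p _ /=; by rewrite mulrA.
Qed.

Lemma ext_prod L M : is_submodule iA L -> is_submodule iA M ->
  sub_eq (ext (prod_sub L M)) (prod_sub (ext L) (ext M)).
Proof.
move=> hL hM z; rewrite (ext_img (prod_mod hL hM)); split.
  move=> [x [[s [hs ->]] ->]]; exists (map (fun p => (ph p.1, ph p.2)) s); split.
    move=> p hp; have [q [qs ->]] := InMap hp; rewrite /=; have [Lq Mq] := hs q qs.
    by split; [apply/(ext_img hL); exists q.1|apply/(ext_img hM); exists q.2].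
  by rewrite rmorph_sum big_map; apply: eq_bigr => p _; rewrite rmorphM.
move=> [s [hs ->]]; elim: s hs => [|p s IH] hs.
  by exists 0; rewrite rmorph0 big_nil; split => //; exists [::]; rewrite big_nil.
have [x [[s1 [h1 ->]] ex]] := IH (fun q qs => hs q (or_intror qs)).
have [/(ext_img hL) [l [Ll el]] /(ext_img hM) [m [Mm em]]] := hs p (or_introl erefl).
exists (l * m + \sum_(q <- s1) q.1 * q.2); split.
  exists ((l, m) :: s1); split; last by rewrite big_cons.
  by move=> q [<-|/h1].
by rewrite big_cons ex el em rmorphD rmorphM.
Qed.

Lemma base_mod (T R : comPzRingType) (j : {rmorphism R -> T}) : is_submodule j (base_sub j).
Proof.
split; [|split].
- by exists 0; rewrite rmorph0.
- by move=> x y [a ->] [b ->]; exists (a + b); rewrite rmorphD.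
- by move=> r x [a ->]; exists (r * a); rewrite rmorphM.
Qed.

Lemma ext_base : sub_eq (ext (base_sub iA)) (base_sub iB).
Proof.
move=> z; rewrite (ext_img (base_mod iA)); split.
  by move=> [x [[a ->] ->]]; exists (pi a); rewrite phiA.
move=> [b ->]; have [a <-] := pi_surj Hpi b; exists (iA a); split; last by rewrite phiA.
by exists a.
Qed.

Lemma ext_inv L : invertible_ideal iA L -> invertible_ideal iB (ext L).
Proof.
move=> [hL [L' [hL' e]]]; split; first exact: ext_sub_mod.
exists (ext L'); split; first exact: ext_sub_mod.
move=> z; rewrite -(ext_prod hL hL' z) -ext_base.
rewrite !(ext_img (prod_mod hL hL')) (ext_img (base_mod iA)).
by split=> -[x [hx ->]]; exists x; split=> //; apply/e.
Qed.


Lemma base_prod (L L' : TA -> Prop) :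
  (forall z, prod_sub L L' z <-> base_sub iA z) ->
  forall l l', L l -> L' l' -> exists a, l * l' = iA a.
Proof.
move=> e l l' Ll Ll'; apply/e; exists [:: (l, l')]; split; last by rewrite big_seq1.
by move=> p [<-|].
Qed.

Lemma sum1 (T R : comPzRingType) (j : {rmorphism R -> T}) (L L' : T -> Prop) :
  (forall z, prod_sub L L' z <-> base_sub j z) ->
  exists s, (forall p, List.In p s -> L p.1 /\ L' p.2) /\ 1 = \sum_(p <- s) p.1 * p.2.
Proof. by move=> e; have [s [hs ->]] := (e 1).2 (ex_intro _ 1 (esym (rmorph1 j))); exists s. Qed.

Lemma INJ L M u : invertible_ideal iA L -> invertible_ideal iA M -> unitP u ->
  (forall z, (exists m, M m /\ z = ph m) <-> (exists l, L l /\ z = ph u * ph l)) ->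
  same_class L M.
Proof.
move=> [hL [L' [hL' eL]]] [hM [M' [hM' eM]]] uu himg.
have [L0 [LD LM]] := hL; have [M0 [MD MM]] := hM.
have [s [hs e1]] := sum1 eL.
have Hy : forall s, (forall p, List.In p s -> L p.1 /\ L' p.2) -> exists y0,
    (forall l, L l -> M (y0 * l)) /\ ph y0 = ph u * ph (\sum_(p <- s) p.1 * p.2).
  elim=> [|p s' IH] hs'.
    exists 0; split; first by move=> l _; rewrite mul0r.
    by rewrite big_nil !rmorph0 mulr0.
  have [y1 [h1 e1']] := IH (fun q qs => hs' q (or_intror qs)).
  have [Lp1 L'p2] := hs' p (or_introl erefl).
  have [m [Mm em]] := (himg (ph u * ph p.1)).2 (ex_intro _ p.1 (conj Lp1 erefl)).
  exists (m * p.2 + y1); split.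
    move=> l Ll; rewrite mulrDl; apply: MD; last exact: h1.
    have [a ea] := base_prod eL Ll L'p2.
    by rewrite -mulrA [p.2 * l]mulrC ea mulrC; apply: MM.
  by rewrite big_cons rmorphD rmorphM e1' -em rmorphD rmorphM; ring.
have [y0 [hy0 ey0]] := Hy s hs.
rewrite -e1 rmorph1 mulr1 in ey0.
exists y0; split.
  by apply: unit_lift; rewrite ey0; exact: unit_ph.
move=> z; split; last by move=> [l [Ll ->]]; apply: hy0.
move=> Mz.
have [s2 [hs2 e2]] := sum1 eM.
have Hw : forall s, (forall q, List.In q s -> M q.1 /\ M' q.2) -> exists a,
    ph (iA a) = ph (\sum_(q <- s) q.1 * q.2) /\
    forall m, M m -> exists l, L l /\ iA a * m = y0 * l.
  elim=> [|q s' IH] hs'.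
    exists 0; split; first by rewrite big_nil !rmorph0.
    by move=> m _; exists 0; split => //; rewrite rmorph0 mul0r mulr0.
  have [a1 [ea1 h1]] := IH (fun q qs => hs' q (or_intror qs)).
  have [Mq1 M'q2] := hs' q (or_introl erefl).
  have [l [Ll el]] := (himg (ph q.1)).1 (ex_intro _ q.1 (conj Mq1 erefl)).
  have [b eb] := base_prod eM (hy0 l Ll) M'q2.
  exists (b + a1); split.
    by rewrite !rmorphD -eb !rmorphM ey0 -el ea1 big_cons rmorphD rmorphM.
  move=> m Mm; have [l1 [Ll1 e1m]] := h1 m Mm.
  have [c ec] := base_prod eM Mm M'q2.
  exists (iA c * l + l1); split; first by apply: LD => //; apply: LM.
  rewrite rmorphD mulrDl e1m -eb mulrDr -ec; ring.
have [a [ea ha]] := Hw s2 hs2.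
rewrite -e2 rmorph1 phiA in ea.
have ua : unitP a.
  apply: nil_unit; apply: (pi0 Hpi); apply: (iB_inj HB).
  by rewrite !rmorphB ea !rmorph1 subrr rmorph0.
have [a' ea'] := ua.
have [l [Ll el]] := ha z Mz.
exists (iA a' * l); split; first by apply: LM.
by rewrite mulrCA -el mulrA -rmorphM [a' * a]mulrC ea' rmorph1 mul1r.
Qed.

Lemma class_iff L M : invertible_ideal iA L -> invertible_ideal iA M ->
  (same_class L M <-> same_class (ext L) (ext M)).
Proof.
move=> hLi hMi; have hL := hLi.1; have hM := hMi.1; split.
- move=> [x [ux hx]]; exists (ph x); split; first exact: unit_ph.
  move=> z; rewrite (ext_img hM); split.
    move=> [m [Mm ->]]; have [y [Ly ->]] := (hx m).1 Mm; exists (ph y); split.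
      by apply/(ext_img hL); exists y.
    by rewrite rmorphM.
  move=> [w [/(ext_img hL) [y [Ly ->]] ->]]; exists (x * y); split.
    by apply/hx; exists y.
  by rewrite rmorphM.
- move=> [X [uX hX]]; have [u eu] := ph_surj X; subst X.
  apply: (INJ hLi hMi (unit_lift uX)) => z; rewrite -(ext_img hM) hX; split.
    by move=> [w [/(ext_img hL) [l [Ll ->]] ->]]; exists l.
  move=> [l [Ll ->]]; exists (ph l); split => //; apply/(ext_img hL); by exists l.
Qed.


Lemma span_mod k (w : 'I_k -> TA) :
  is_submodule iA (fun z => exists a : 'I_k -> A, z = \sum_j iA (a j) * w j).
Proof.
split; [|split].
- exists (fun=> 0); rewrite big1 // => j _; by rewrite rmorph0 mul0r.
- move=> x y [a ->] [b ->]; exists (fun j => a j + b j); rewrite -big_split /=.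
  by apply: eq_bigr => j _; rewrite rmorphD mulrDl.
- move=> t x [a ->]; exists (fun j => t * a j); rewrite mulr_sumr.
  by apply: eq_bigr => j _; rewrite rmorphM mulrA.
Qed.

Lemma span_delta k (w : 'I_k -> TA) (j : 'I_k) (a : A) :
  iA a * w j = \sum_l iA ((fun l => if l == j then a else 0) l) * w l.
Proof.
rewrite (bigD1 j) //= eqxx big1 ?addr0 // => l /negbTE ->.
by rewrite rmorph0 mul0r.
Qed.

Lemma prod_single (T : comPzRingType) (L M : T -> Prop) x y :
  L x -> M y -> prod_sub L M (x * y).
Proof.
move=> Lx My; exists [:: (x, y)]; split; last by rewrite big_seq1.
by move=> p [<-|].
Qed.

Lemma surj N : invertible_ideal iB N ->
  exists L, invertible_ideal iA L /\ same_class (ext L) N.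
Proof.
move=> [hN [N' [hN' eN]]].
have [N0 [ND NM]] := hN.
have [s [hs e1]] := sum1 eN.
pose k := size s.
pose n (j : 'I_k) := (nth (0, 0) s j).1.
pose n' (j : 'I_k) := (nth (0, 0) s j).2.
have hn : forall j, N (n j) /\ N' (n' j).
  by move=> j; apply: hs; apply: memIn; apply: mem_nth.
have e1' : \sum_(j < k) n j * n' j = 1 by rewrite e1 (big_nth (0, 0)) big_mkord.
have [e he] : exists e : 'M[B]_k, forall i j, iB (e i j) = n' i * n j.
  apply: (@mx_choice B 0 k k (fun i j b => iB b = n' i * n j)) => i j.
  have [b eb] := (eN (n j * n' i)).1 (prod_single (hn j).1 (hn i).2).
  by exists b; rewrite -eb mulrC.
have [g hg] : exists g : 'M[A]_k, forall i j, pi (g i j) = e i j.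
  by apply: (@mx_choice A 0 k k (fun i j a => pi a = e i j)) => i j; apply: (pi_surj Hpi).
have [x hx] : exists x : 'rV[TA]_k, forall i j, ph (x i j) = n j.
  by apply: (@mx_choice TA 0 1 k (fun i j y => ph y = n j)) => i j; apply: ph_surj.
have [x' hx'] : exists x' : 'cV[TA]_k, forall i j, ph (x' i j) = n' i.
  by apply: (@mx_choice TA 0 k 1 (fun i j y => ph y = n' i)) => i j; apply: ph_surj.
have hgg : nilmx (g - g * g).
  move=> i j; apply: (pi0 Hpi); apply: (iB_inj HB).
  rewrite -mulmxE !mxE rmorph0 rmorphD rmorphN rmorph_sum rmorphD rmorphN rmorph_sum /=.
  rewrite hg he.
  have -> : \sum_l iB (pi (g i l * g l j)) = n' i * n j * \sum_l n l * n' l.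
    rewrite mulr_sumr; apply: eq_bigr => l _; rewrite !rmorphM !hg !he; ring.
  by rewrite e1' mulr1 subrr.
have [G [GG hG]] := idem_lift hgg.
have piG : forall i j, pi (G i j) = e i j.
  move=> i j; rewrite -hg; apply/eqP; rewrite -subr_eq0 -rmorphB; apply/eqP.
  by apply: nil_pi; have := hG i j; rewrite !mxE.
pose Gt := map_mx iA G.
have GtGt : Gt *m Gt = Gt by rewrite -map_mxM mulmxE GG.
pose nb := map_mx ph x; pose nb' := map_mx ph x'.
have nbnb' : nb *m nb' = 1%:M.
  apply/matrixP => i j; rewrite (ord1 i) (ord1 j) !mxE -e1'.
  by apply: eq_bigr => l _; rewrite !mxE hx hx'.
have phGt : map_mx ph Gt = nb' *m nb.
  apply/matrixP => i j; rewrite !mxE big_ord1 !mxE phiA piG he hx hx'.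
  by [].
pose c1 := Gt *m x'; pose r1 := x *m Gt.
have phr1 : map_mx ph r1 = nb by rewrite map_mxM phGt mulmxA nbnb' mul1mx.
have phc1 : map_mx ph c1 = nb' by rewrite map_mxM phGt -mulmxA nbnb' mulmx1.
pose u := (r1 *m c1) 0 0.
have phu : ph u = 1.
  have : map_mx ph (r1 *m c1) = 1%:M by rewrite map_mxM phr1 phc1.
  move/matrixP => /(_ 0 0) h; have <- : (map_mx ph (r1 *m c1)) 0 0 = ph u by rewrite mxE.
  by rewrite h mxE.
have [v uv] : unitP u.
  by apply: nil_unit; apply: ph0_nil; rewrite rmorphB phu rmorph1 subrr.
have phv : ph v = 1 by move: (congr1 ph uv); rewrite rmorphM phu mul1r rmorph1.
pose c := v *: c1; pose r := r1.
have rc : r *m c = 1%:M.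
  apply/matrixP => i j; rewrite (ord1 i) (ord1 j) /r /c -scalemxAr.
  by rewrite [LHS]mxE [RHS]mxE -/u mulrC uv.
pose Hm := c *m r.
have HH : Hm *m Hm = Hm by rewrite /Hm mulmxA -(mulmxA c) rc mulmx1.
have Gc : Gt *m c = c by rewrite /c -scalemxAr /c1 mulmxA GtGt.
have rG : r *m Gt = r by rewrite /r /r1 -mulmxA GtGt.
have GH : Gt *m Hm = Hm by rewrite /Hm mulmxA Gc.
have HG : Hm *m Gt = Hm by rewrite /Hm -mulmxA rG.
have phH : map_mx ph Hm = map_mx ph Gt.
  by rewrite map_mxM map_mxZ phv scale1r phc1 phr1 phGt.
pose D := Gt - Hm.
have DD : D * D = D.
  by rewrite -mulmxE mulmxBl !mulmxBr GtGt GH HG HH subrr subr0.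
have nilD : nilmx D.
  move=> i j; apply: ph0_nil.
  have : map_mx ph D = 0 by rewrite map_mxB phH subrr.
  by move/matrixP => /(_ i j); rewrite !mxE.
have [M hM] := mx_nilpotent nilD.
have D0 : D = 0.
  case: M hM => [|M] hM; first by rewrite -[D]mulr1 -(expr0 D) hM mulr0.
  have : forall m, D ^+ m.+1 = D.
    by elim=> [|m IH]; [rewrite expr1 | rewrite exprS IH DD].
  by move=> /(_ M) <-.
have GtH : forall i j, iA (G i j) = c i 0 * r 0 j.
  move=> i j.
  have HmE : Hm i j = c i 0 * r 0 j by rewrite /Hm [LHS]mxE big_ord1.
  have GtE : Gt i j = iA (G i j) by rewrite /Gt mxE.
  by rewrite -GtE -HmE; move/matrixP: (subr0_eq D0) => /(_ i j).
have rc1 : \sum_j r 0 j * c j 0 = 1.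
  by move/matrixP: rc => /(_ 0 0); rewrite !mxE.
have phr : forall j, ph (r 0 j) = n j.
  by move=> j; move/matrixP: phr1 => /(_ 0 j); rewrite !mxE hx.
pose L z := exists a : 'I_k -> A, z = \sum_j iA (a j) * r 0 j.
pose L' z := exists a : 'I_k -> A, z = \sum_j iA (a j) * c j 0.
have hL : is_submodule iA L := span_mod (fun j => r 0 j).
have hL' : is_submodule iA L' := span_mod (fun j => c j 0).
exists L; split.
  split => //; exists L'; split => // z; split.
    move=> [s0 [hs0 ->]]; elim: s0 hs0 => [|p s0 IH] hs0.
      by exists 0; rewrite big_nil rmorph0.
    have [a ea] := IH (fun q qs => hs0 q (or_intror qs)).
    have [[a1 e1a] [b1 e1b]] := hs0 p (or_introl erefl).
    exists (\sum_j \sum_i a1 j * b1 i * G i j + a).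
    rewrite big_cons e1a e1b ea rmorphD; congr (_ + _).
    rewrite rmorph_sum mulr_suml; apply: eq_bigr => j _.
    rewrite rmorph_sum mulr_sumr; apply: eq_bigr => i _.
    by rewrite !rmorphM GtH; ring.
  move=> [a ->].
  exists [seq (iA a * r 0 j, c j 0) | j <- index_enum 'I_k]; split.
    move=> p hp; have [j [_ ->]] := InMap hp; split => /=.
      by exists (fun l => if l == j then a else 0); apply: span_delta.
    exists (fun l => if l == j then 1 else 0).
    by rewrite -span_delta rmorph1 mul1r.
  rewrite big_map /= -[LHS]mulr1 -rc1 mulr_sumr.
  by apply: eq_bigr => j _; rewrite mulrA.
exists 1; split; first by exists 1; rewrite mulr1.
move=> z; split.
  move=> Nz.
  have [a ha] : exists a : 'I_k -> A, forall j, z * n' j = iB (pi (a j)).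
    apply: (@fchoice _ _ 0 (fun j a => z * n' j = iB (pi a))) => j.
    have [b eb] := (eN (z * n' j)).1 (prod_single Nz (hn j).2).
    by have [a' ea'] := pi_surj Hpi b; exists a'; rewrite ea'.
  exists (ph (\sum_j iA (a j) * r 0 j)); split.
    by apply/(ext_img hL); exists (\sum_j iA (a j) * r 0 j); split => //; exists a.
  rewrite mul1r rmorph_sum -[z]mulr1 -e1' mulr_sumr; apply: eq_bigr => j _.
  by rewrite rmorphM phiA -ha phr; ring.
move=> [y [/(ext_img hL) [l [[a ->] ->]] ->]]; rewrite mul1r rmorph_sum.
apply: (big_ind N); [exact: N0 | by move=> ? ? ? ?; apply: ND | move=> j _].
by rewrite rmorphM phiA phr; apply: NM; apply: (hn j).1.
Qed.

End Main.

Theorem corollary5p8 (A TA B TB : comPzRingType)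
  (iA : {rmorphism A -> TA}) (pi : {rmorphism A -> B}) (iB : {rmorphism B -> TB}) :
  total_ring_of_fractions iA -> reduction_map pi -> total_ring_of_fractions iB ->
  (forall a : A, zero_divisor a <-> exists P, is_minimal_prime P /\ P a) ->
  exists phi : {rmorphism TA -> TB},
    (forall a, phi (iA a) = iB (pi a)) /\
    (forall L, invertible_ideal iA L -> invertible_ideal iB (ext_sub iB phi L)) /\
    (forall L M, invertible_ideal iA L -> invertible_ideal iA M ->
       sub_eq (ext_sub iB phi (prod_sub L M))
              (prod_sub (ext_sub iB phi L) (ext_sub iB phi M))) /\
    (forall L M, invertible_ideal iA L -> invertible_ideal iA M ->
       (same_class L M <-> same_class (ext_sub iB phi L) (ext_sub iB phi M))) /\
    (forall N, invertible_ideal iB N ->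
       exists L, invertible_ideal iA L /\ same_class (ext_sub iB phi L) N).
Proof.
move=> HA Hpi HB Hz; exists (phi HA Hpi HB); split; first exact: phi_iA.
split; first by move=> L; apply: ext_inv.
split; first by move=> L M hL hM; apply: ext_prod; [case: hL | case: hM].
split; first by move=> L M; apply: class_iff.
by move=> N; apply: (surj HA Hpi HB Hz).
Qed.
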